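(* Let $\mathfrak{S}\subset\mathbb{R}^D$ be a state space, $\mathfrak{A}$ an action space, $\mathfrak{Z}\coloneqq\mathfrak{S}\times\mathfrak{A}$, and let $\mathcal{H}$ be a reproducing kernel Hilbert space of real-valued functions on $\mathfrak{Z}$ with reproducing kernel $\kappa$ and feature map $\varphi(\mathbf{z})\coloneqq\kappa(\mathbf{z},\cdot)$. Let $\mathcal{M}$ be the set of all maps $\mu\colon\mathfrak{S}\to\mathfrak{A}$. Fix $g\in\mathcal{H}$, a discount factor $\alpha\ge 0$, an integer $N_{\mathrm{av}}\ge 1$, states $\mathbf{s}^{\mathrm{av}}_1,\ldots,\mathbf{s}^{\mathrm{av}}_{N_{\mathrm{av}}}\in\mathfrak{S}$ and functions $\psi_1,\ldots,\psi_{N_{\mathrm{av}}}\in\mathcal{H}$. Define, for every $\mu\in\mathcal{M}$ and $Q\in\mathcal{H}$, $$T_\mu(Q)\coloneqq g+\alpha\sum_{i=1}^{N_{\mathrm{av}}}Q\big(\mathbf{s}^{\mathrm{av}}_i,\mu(\mathbf{s}^{\mathrm{av}}_i)\big)\,\psi_i,\qquad T(Q)\coloneqq g+\alpha\sum_{i=1}^{N_{\mathrm{av}}}\Big(\inf_{a\in\mathfrak{A}}Q(\mathbf{s}^{\mathrm{av}}_i,a)\Big)\,\psi_i ,$$ where all the infima are assumed finite. Let $\mathbf{K}_\Psi$ be the $N_{\mathrm{av}}\times N_{\mathrm{av}}$ matrix with entries $\langle\psi_i,\psi_j\rangle_{\mathcal{H}}$, and for $\mu'\in\mathcal{M}$ let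 $\mathbf{K}^{\mathrm{av}}_{\mu'}$ be the $N_{\mathrm{av}}\times N_{\mathrm{av}}$ matrix with entries $\kappa\big((\mathbf{s}^{\mathrm{av}}_i,\mu'(\mathbf{s}^{\mathrm{av}}_i)),(\mathbf{s}^{\mathrm{av}}_j,\mu'(\mathbf{s}^{\mathrm{av}}_j))\big)$. Set $$\beta\coloneqq\alpha\Big(\|\mathbf{K}_\Psi\|_2\,\sup_{\mu'\in\mathcal{M}}\|\mathbf{K}^{\mathrm{av}}_{\mu'}\|_2\Big)^{1/2},$$ with $\|\cdot\|_2$ the spectral norm. Then for all $Q_1,Q_2\in\mathcal{H}$ and all $\mu\in\mathcal{M}$, $$\|T_\mu(Q_1)-T_\mu(Q_2)\|_{\mathcal{H}}\le\beta\|Q_1-Q_2\|_{\mathcal{H}},\qquad \|T(Q_1)-T(Q_2)\|_{\mathcal{H}}\le\beta\|Q_1-Q_2\|_{\mathcal{H}}.$$ In particular, if $\beta=1$ both maps are nonexpansive, and if $\beta<1$ both are contractions on $\mathcal{H}$.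
   Context: $Q(\mathbf{z})$ denotes evaluation of $Q\in\mathcal{H}$ at $\mathbf{z}\in\mathfrak{Z}$; by the reproducing property $Q(\mathbf{z})=\langle Q,\varphi(\mathbf{z})\rangle_{\mathcal{H}}$. *)

(* Defs.v *)
From HB Require Import structures.
From mathcomp Require Import all_boot all_order all_algebra.
From mathcomp Require Import all_classical all_reals.
Set Implicit Arguments. Unset Strict Implicit. Unset Printing Implicit Defensive.
Import Order.TTheory GRing.Theory Num.Theory.
Local Open Scope classical_set_scope.
Local Open Scope ring_scope.

Section Defs.
Variable R : realType.

Definition vnorm2 n (v : 'cV[R]_n) : R := Num.sqrt (\sum_(i < n) v i 0 ^+ 2).

Definition spec_norm n (M : 'M[R]_n) : R :=
  sup [set vnorm2 (M *m v) | v in [set v : 'cV[R]_n | vnorm2 v <= 1]].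

Variable H : lmodType R.

Definition is_inner_product (ip : H -> H -> R) : Prop :=
  [/\ forall x y, ip x y = ip y x,
      forall a x y z, ip (a *: x + y) z = a * ip x z + ip y z,
      forall x, 0 <= ip x x &
      forall x, ip x x = 0 -> x = 0].

Definition hnorm (ip : H -> H -> R) (x : H) : R := Num.sqrt (ip x x).

Definition ip_complete (ip : H -> H -> R) : Prop :=
  forall u : nat -> H,
    (forall e : R, 0 < e -> exists N : nat, forall m n : nat,
        (N <= m)%N -> (N <= n)%N -> hnorm ip (u m - u n) < e) ->
    exists l : H, forall e : R, 0 < e -> exists N : nat, forall n : nat,
        (N <= n)%N -> hnorm ip (u n - l) < e.

Variable Z : Type.

Definition eval (ip : H -> H -> R) (phi : Z -> H) (Q : H) (z : Z) : R := ip Q (phi z).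

Definition kern (ip : H -> H -> R) (phi : Z -> H) (z z' : Z) : R := ip (phi z) (phi z').

(* H is (isomorphic to) an RKHS of real functions on Z with feature map phi:
   a real Hilbert space whose elements are identified with the functions
   z |-> <Q, phi z> (this identification being injective). *)
Definition is_rkhs (ip : H -> H -> R) (phi : Z -> H) : Prop :=
  [/\ is_inner_product ip, ip_complete ip & injective (eval ip phi)].

End Defs.

(* Main.v *)
Require Import Defs.
From HB Require Import structures.
From mathcomp Require Import all_boot all_order all_algebra.
From mathcomp Require Import all_classical all_reals.
From mathcomp Require Import ring lra.
Import Order.TTheory GRing.Theory Num.Theory.
Local Open Scope classical_set_scope.
Local Open Scope ring_scope.


Section IP.
Variables (R : realType) (H : lmodType R) (ip : H -> H -> R).
Hypothesis Hip : is_inner_product ip.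

Lemma ipC x y : ip x y = ip y x. Proof. by case: Hip. Qed.
Lemma ipZDl a x y z : ip (a *: x + y) z = a * ip x z + ip y z. Proof. by case: Hip. Qed.
Lemma ipxx_ge0 x : 0 <= ip x x. Proof. by case: Hip. Qed.
Lemma ipxx_eq0 x : ip x x = 0 -> x = 0. Proof. by case: Hip => _ _ _; apply. Qed.
Lemma ipDl x y z : ip (x + y) z = ip x z + ip y z.
Proof. by have := ipZDl 1 x y z; rewrite scale1r mul1r. Qed.
Lemma ipZl a x z : ip (a *: x) z = a * ip x z.
Proof.
have h0 : ip 0 z = 0.
  have := ipDl 0 0 z; rewrite addr0 => h; lra.
by rewrite -[a *: x]addr0 ipZDl h0 addr0.
Qed.
Lemma ip0l z : ip 0 z = 0.
Proof. by rewrite -(scale0r 0) ipZl mul0r. Qed.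
Lemma ipNl x z : ip (- x) z = - ip x z.
Proof. by rewrite -scaleN1r ipZl mulN1r. Qed.
Lemma ipBl x y z : ip (x - y) z = ip x z - ip y z.
Proof. by rewrite ipDl ipNl. Qed.
Lemma ipDr x y z : ip z (x + y) = ip z x + ip z y.
Proof. by rewrite ipC ipDl !(ipC z). Qed.
Lemma ipZr a x z : ip z (a *: x) = a * ip z x.
Proof. by rewrite ipC ipZl ipC. Qed.
Lemma ipBr x y z : ip z (x - y) = ip z x - ip z y.
Proof. by rewrite ipC ipBl !(ipC z). Qed.
Lemma ip_suml (I : finType) (F : I -> H) z : ip (\sum_i F i) z = \sum_i ip (F i) z.
Proof.
elim/big_rec2: _ => [|i a b _ <-]; first exact: ip0l.
by rewrite ipDl.
Qed.
Lemma ip_sumr (I : finType) (F : I -> H) z : ip z (\sum_i F i) = \sum_i ip z (F i).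
Proof. by rewrite ipC ip_suml; apply: eq_bigr => i _; rewrite ipC. Qed.

Lemma CS2 x y : ip x y ^+ 2 <= ip x x * ip y y.
Proof.
have [y0|yn0] := eqVneq (ip y y) 0.
  by rewrite (ipxx_eq0 y y0) ipC ip0l expr0n /= ip0l mulr0.
have yp : 0 < ip y y by rewrite lt0r yn0 ipxx_ge0.
set t := ip x y / ip y y.
have := ipxx_ge0 (x - t *: y).
rewrite ipBl !ipBr !ipZl !ipZr (ipC y x).
have -> : ip x x - t * ip x y - (t * ip x y - t * (t * ip y y))
   = ip x x - ip x y ^+ 2 / ip y y.
  rewrite /t; field; exact: yn0.
rewrite subr_ge0 ler_pdivrMr //.
Qed.

Lemma hnorm_ge0 x : 0 <= hnorm ip x. Proof. exact: sqrtr_ge0. Qed.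
Lemma hnorm_sq x : hnorm ip x ^+ 2 = ip x x.
Proof. by rewrite sqr_sqrtr // ipxx_ge0. Qed.

Lemma CS x y : ip x y <= hnorm ip x * hnorm ip y.
Proof.
have [le0|gt0] := lerP (ip x y) 0.
  by apply: le_trans le0 _; rewrite mulr_ge0 // hnorm_ge0.
rewrite -(ger0_norm (ltW gt0)) -sqrtr_sqr /hnorm -sqrtrM ?ipxx_ge0 //.
by rewrite ler_sqrt ?mulr_ge0 ?ipxx_ge0 // CS2.
Qed.

Lemma hnormZ a x : hnorm ip (a *: x) = `|a| * hnorm ip x.
Proof.
by rewrite /hnorm ipZl ipZr mulrA -expr2 sqrtrM ?sqr_ge0 // sqrtr_sqr.
Qed.

Lemma hnormD x y : hnorm ip (x + y) <= hnorm ip x + hnorm ip y.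
Proof.
rewrite -(ler_pXn2r (n:=2)) ?nnegrE ?addr_ge0 ?hnorm_ge0 //.
rewrite !hnorm_sq sqrrD !hnorm_sq ipDl !ipDr (ipC y x).
have := CS x y; lra.
Qed.

End IP.
Arguments ipC {R H ip}.
Arguments ipZDl {R H ip}.
Arguments ipxx_ge0 {R H ip}.
Arguments ipxx_eq0 {R H ip}.
Arguments ipDl {R H ip}.
Arguments ipZl {R H ip}.
Arguments ip0l {R H ip}.
Arguments ipNl {R H ip}.
Arguments ipBl {R H ip}.
Arguments ipDr {R H ip}.
Arguments ipZr {R H ip}.
Arguments ipBr {R H ip}.
Arguments ip_suml {R H ip}.
Arguments ip_sumr {R H ip}.
Arguments CS2 {R H ip}.
Arguments hnorm_ge0 {R H ip}.
Arguments hnorm_sq {R H ip}.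
Arguments CS {R H ip}.
Arguments hnormZ {R H ip}.
Arguments hnormD {R H ip}.
Section Vec.
Variables (R : realType) (n : nat).
Definition ipv (u v : 'cV[R]_n) : R := \sum_i u i 0 * v i 0.

Lemma ipv_ip : is_inner_product ipv.
Proof.
split.
- by move=> x y; apply: eq_bigr => i _; rewrite mulrC.
- move=> a x y z; rewrite /ipv mulr_sumr -big_split /=; apply: eq_bigr => i _.
  by rewrite !mxE; ring.
- by move=> x; apply: sumr_ge0 => i _; rewrite -expr2 sqr_ge0.
- move=> x /eqP; rewrite psumr_eq0 => [/allP h|i _]; last by rewrite -expr2 sqr_ge0.
  apply/matrixP => i j; rewrite ord1 mxE.
  have := h i (mem_index_enum i); rewrite /= -expr2 sqrf_eq0 => /eqP //.
Qed.

Lemma vnorm2E (v : 'cV[R]_n) : vnorm2 v = hnorm ipv v.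
Proof. by rewrite /vnorm2 /hnorm /ipv; congr Num.sqrt; apply: eq_bigr => i _; rewrite expr2. Qed.

Lemma vnorm2_ge0 (v : 'cV[R]_n) : 0 <= vnorm2 v.
Proof. exact: sqrtr_ge0. Qed.

Lemma spec_set_ub (M : 'M[R]_n) :
  ubound [set vnorm2 (M *m v) | v in [set v : 'cV[R]_n | vnorm2 v <= 1]]
    (Num.sqrt (\sum_i ipv (\col_j M i j) (\col_j M i j))).
Proof.
move=> _ [v /= hv <-]; rewrite /vnorm2 ler_sqrt; last first.
  by apply: sumr_ge0 => i _; exact: (ipxx_ge0 ipv_ip).
apply: ler_sum => i _.
have -> : (M *m v) i 0 = ipv (\col_j M i j) v.
  by rewrite mxE; apply: eq_bigr => j _; rewrite mxE.
apply: le_trans (CS2 ipv_ip _ _) _.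
rewrite ler_piMr ?(ipxx_ge0 ipv_ip) //.
by rewrite -(hnorm_sq ipv_ip) -vnorm2E expr_le1 // vnorm2_ge0.
Qed.

Lemma spec_has_sup (M : 'M[R]_n) :
  has_sup [set vnorm2 (M *m v) | v in [set v : 'cV[R]_n | vnorm2 v <= 1]].
Proof.
split; last by eexists; exact: spec_set_ub.
exists (vnorm2 (M *m 0)), 0 => //=.
by rewrite /vnorm2 big1 ?sqrtr0 // => i _; rewrite mxE expr0n.
Qed.

Lemma spec_bound (M : 'M[R]_n) v : vnorm2 v <= 1 -> vnorm2 (M *m v) <= spec_norm M.
Proof. by move=> hv; apply: sup_upper_bound (spec_has_sup M) _ _; exists v. Qed.

Lemma spec_ge0 (M : 'M[R]_n) : 0 <= spec_norm M.
Proof.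
apply: le_trans (spec_bound M 0 _); first exact: vnorm2_ge0.
by rewrite /vnorm2 big1 ?sqrtr0 // => i _; rewrite mxE expr0n.
Qed.

Lemma spec_scale (M : 'M[R]_n) v : vnorm2 (M *m v) <= spec_norm M * vnorm2 v.
Proof.
have [v0|vn0] := eqVneq (vnorm2 v) 0.
  rewrite v0 mulr0; move: v0; rewrite vnorm2E /hnorm => /eqP; rewrite sqrtr_eq0 => h.
  have -> : v = 0 by apply: (ipxx_eq0 ipv_ip); apply/eqP; rewrite eq_le h (ipxx_ge0 ipv_ip).
  by rewrite mulmx0 /vnorm2 big1 ?sqrtr0 // => i _; rewrite mxE expr0n.
have vp : 0 < vnorm2 v by rewrite lt0r vn0 vnorm2_ge0.
have := spec_bound M ((vnorm2 v)^-1 *: v).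
rewrite !vnorm2E -scalemxAr !(hnormZ ipv_ip) -!vnorm2E.
have hi : `|(vnorm2 v)^-1| = (vnorm2 v)^-1 by rewrite ger0_norm // invr_ge0 ltW.
rewrite hi mulVf // lexx => /(_ isT).
by rewrite mulrC -ler_pdivlMr ?invr_gt0 // invrK.
Qed.

End Vec.
Arguments ipv {R n}.
Arguments ipv_ip {R n}.
Arguments vnorm2E {R n}.
Arguments vnorm2_ge0 {R n}.
Arguments spec_set_ub {R n}.
Arguments spec_has_sup {R n}.
Arguments spec_bound {R n}.
Arguments spec_ge0 {R n}.
Arguments spec_scale {R n}.

Lemma Lquad (R : realType) (H : lmodType R) (ip : H -> H -> R) (Hip : is_inner_product ip)
  n (c : 'cV[R]_n) (h : 'I_n -> H) :
  ip (\sum_i c i 0 *: h i) (\sum_i c i 0 *: h i)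
    <= spec_norm (\matrix_(i < n, j < n) ip (h i) (h j)) * vnorm2 c ^+ 2.
Proof.
have -> : ip (\sum_i c i 0 *: h i) (\sum_i c i 0 *: h i)
   = ipv c ((\matrix_(i < n, j < n) ip (h i) (h j)) *m c).
  rewrite (ip_suml Hip) /ipv; apply: eq_bigr => i _.
  rewrite (ipZl Hip) (ip_sumr Hip) !mxE !mulr_sumr; apply: eq_bigr => j _.
  by rewrite (ipZr Hip) mxE; ring.
apply: le_trans (CS ipv_ip _ _) _.
rewrite -!vnorm2E.
have := spec_scale (\matrix_(i < n, j < n) ip (h i) (h j)) c.
have := vnorm2_ge0 c.
set a := vnorm2 c; set b := vnorm2 _; set s := spec_norm _ => ha hb.
apply: le_trans (ler_wpM2l ha hb) _; rewrite expr2 le_eqVlt; apply/orP; left; apply/eqP; ring.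
Qed.
Arguments Lquad {R H ip} Hip {n}.
Lemma normK2 (R : realType) (x : R) : `|x| ^+ 2 = x ^+ 2.
Proof. by rewrite real_normK ?num_real. Qed.

Lemma Lbound (R : realType) (H : lmodType R) (ip : H -> H -> R) (Hip : is_inner_product ip)
  (Zt : Type) (phi : Zt -> H) n (z : 'I_n -> Zt) (Q : H) :
  vnorm2 (\col_i ip Q (phi (z i))) ^+ 2
    <= spec_norm (\matrix_(i < n, j < n) kern ip phi (z i) (z j)) * ip Q Q.
Proof.
set d := \col_i ip Q (phi (z i)).
set K := spec_norm _.
have hK : 0 <= K by exact: spec_ge0.
have hQ : 0 <= ip Q Q by exact: ipxx_ge0.
set W := \sum_i d i 0 *: phi (z i).
have hs : vnorm2 d ^+ 2 = ip Q W.
  rewrite vnorm2E (hnorm_sq ipv_ip) (ip_sumr Hip) /ipv; apply: eq_bigr => i _.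
  by rewrite (ipZr Hip) {2}/d mxE.
have hW : ip W W <= K * vnorm2 d ^+ 2.
  by have := Lquad Hip d (fun i => phi (z i)); rewrite /K /kern.
have := CS2 Hip Q W; rewrite -hs.
set s := vnorm2 d ^+ 2 => hcs.
have s0 : 0 <= s by rewrite exprn_ge0 // vnorm2_ge0.
have [->|sn0] := eqVneq s 0; first by rewrite mulr_ge0.
have sp : 0 < s by rewrite lt0r sn0.
have : s * s <= (K * ip Q Q) * s.
  apply: le_trans (_ : s ^+ 2 <= _); first by rewrite expr2.
  apply: le_trans hcs _; have := ler_wpM2l hQ hW; rewrite -/s => h.
  by apply: (le_trans h); rewrite mulrCA mulrA.
by rewrite (ler_pM2r sp).
Qed.

Lemma Lfinal (R : realType) (H : lmodType R) (ip : H -> H -> R) (Hip : is_inner_product ip)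
  n (alpha : R) (ha : 0 <= alpha) (psi : 'I_n -> H) (dd : 'I_n -> R) :
  hnorm ip (alpha *: \sum_i dd i *: psi i)
   <= alpha * Num.sqrt (spec_norm (\matrix_(i < n, j < n) ip (psi i) (psi j)))
        * vnorm2 (\col_i dd i).
Proof.
rewrite (hnormZ Hip) ger0_norm // -mulrA ler_wpM2l //.
have := Lquad Hip (\col_i dd i) psi.
under eq_bigr do rewrite mxE.
rewrite -ler_sqrt ?mulr_ge0 ?exprn_ge0 ?vnorm2_ge0 ?spec_ge0 //.
by rewrite sqrtrM ?spec_ge0 // sqrtr_sqr ger0_norm ?vnorm2_ge0.
Qed.

Lemma Lvn (R : realType) (x K S q : R) : 0 <= x -> 0 <= q -> x ^+ 2 <= K * q -> K <= S ->
  x <= Num.sqrt S * Num.sqrt q.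
Proof.
move=> hx hq h1 h2.
have h3 : x ^+ 2 <= S * q by apply: le_trans h1 _; rewrite ler_wpM2r.
case: (lerP 0 S) => S0; last first.
  have : S * q <= 0 by rewrite nmulr_rle0 // ; nra.
  move=> h4; have : x <= 0 by rewrite expr2 in h3; nra.
  by move=> h5; apply: le_trans h5 _; rewrite mulr_ge0 ?sqrtr_ge0.
rewrite -sqrtrM // -(ger0_norm hx) -sqrtr_sqr ler_sqrt //.
by apply: le_trans h3; rewrite exprn_ge0.
Qed.

Lemma Linf (R : realType) (A : Type) (f1 f2 : A -> R) (eps : R) :
  has_inf (range f1) -> has_inf (range f2) -> 0 < eps ->
  exists a, `|inf (range f1) - inf (range f2)| <= `|f1 a - f2 a| + eps.
Proof.
move=> h1 h2 he.
have lb1 := ge_inf h1.2; have lb2 := ge_inf h2.2.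
case: (lerP (inf (range f2)) (inf (range f1))) => c.
  have [_ [a _ <-] ha] := inf_adherent he h2.
  exists a; have := lb1 (f1 a) (ex_intro2 _ _ a I erefl).
  move=> hb.
  have : f1 a - f2 a <= `|f1 a - f2 a| by apply: ler_norm.
  lra.
have [_ [a _ <-] ha] := inf_adherent he h1.
exists a; have := lb2 (f2 a) (ex_intro2 _ _ a I erefl).
move=> hb.
have : - (f1 a - f2 a) <= `|f1 a - f2 a| by rewrite -normrN ler_norm.
lra.
Qed.
Lemma Lmono (R : realType) n (d u : 'I_n -> R) :
  (forall i, `|d i| <= u i) -> vnorm2 (\col_i d i) <= vnorm2 (\col_i u i).
Proof.
move=> h; rewrite /vnorm2 ler_sqrt; last by apply: sumr_ge0 => i _; rewrite sqr_ge0.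
apply: ler_sum => i _; rewrite !mxE -normK2.
rewrite ler_pXn2r ?nnegrE //; apply: le_trans (h i); exact: normr_ge0.
Qed.

Lemma Lshift (R : realType) n (e : 'I_n -> R) (eps : R) : 0 <= eps ->
  vnorm2 (\col_i (`|e i| + eps)) <= vnorm2 (\col_i e i) + eps * vnorm2 (\col_i (1 : R) : 'cV[R]_n).
Proof.
move=> he.
have -> : (\col_i (`|e i| + eps)) = (\col_i `|e i|) + eps *: (\col_i (1:R)) :> 'cV[R]_n.
  by apply/matrixP => i j; rewrite !mxE mulr1.
rewrite !vnorm2E; apply: le_trans (hnormD ipv_ip _ _) _.
rewrite (hnormZ ipv_ip) ger0_norm // lerD2r -!vnorm2E /vnorm2.
rewrite le_eqVlt; apply/orP; left; apply/eqP; congr Num.sqrt; apply: eq_bigr => i _; by rewrite !mxE normK2.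
Qed.

Lemma Ldiff (R : realType) (H : lmodType R) n (g : H) (a : R) (p : 'I_n -> H) (x y : 'I_n -> R) :
  g + a *: \sum_i x i *: p i - (g + a *: \sum_i y i *: p i) = a *: \sum_i (x i - y i) *: p i.
Proof.
rewrite opprD addrACA subrr add0r -scalerBr -sumrB.
by congr (_ *: _); apply: eq_bigr => i _; rewrite scalerBl.
Qed.
Arguments Lfinal {R H ip} Hip {n alpha} ha psi dd.
Arguments Lbound {R H ip} Hip {Zt} phi {n} z Q.
Arguments Lvn {R x K S q}.
Arguments Linf {R A f1 f2 eps}.
Arguments Lmono {R n d u}.
Arguments Lshift {R n} e {eps}.

Theorem theorem1 (R : realType) (D : nat) (SS : set 'rV[R]_D) (A : Type)
  (H : lmodType R) (ip : H -> H -> R)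
  (phi : ({s : 'rV[R]_D | SS s} * A)%type -> H)
  (Hrkhs : is_rkhs ip phi)
  (g : H) (alpha : R) (Halpha : 0 <= alpha)
  (Nav : nat) (HN : (0 < Nav)%N)
  (sav : 'I_Nav -> {s : 'rV[R]_D | SS s}) (psi : 'I_Nav -> H)
  (Hinf : forall (Q : H) (i : 'I_Nav),
      has_inf (range (fun a : A => eval ip phi Q (sav i, a))))
  (Hsup : has_ubound (range (fun mu' : {s : 'rV[R]_D | SS s} -> A =>
      spec_norm (\matrix_(i < Nav, j < Nav)
        kern ip phi (sav i, mu' (sav i)) (sav j, mu' (sav j)))))) :
  let Tmu := fun (mu : {s : 'rV[R]_D | SS s} -> A) (Q : H) =>
    g + alpha *: \sum_(i < Nav) eval ip phi Q (sav i, mu (sav i)) *: psi i in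
  let T := fun Q : H =>
    g + alpha *: \sum_(i < Nav)
          inf (range (fun a : A => eval ip phi Q (sav i, a))) *: psi i in
  let KPsi := \matrix_(i < Nav, j < Nav) ip (psi i) (psi j) in
  let Kav := fun mu' : {s : 'rV[R]_D | SS s} -> A =>
    \matrix_(i < Nav, j < Nav)
      kern ip phi (sav i, mu' (sav i)) (sav j, mu' (sav j)) in
  let beta := alpha * Num.sqrt (spec_norm KPsi * sup (range (fun mu' => spec_norm (Kav mu')))) in
  forall (Q1 Q2 : H) (mu : {s : 'rV[R]_D | SS s} -> A),
    hnorm ip (Tmu mu Q1 - Tmu mu Q2) <= beta * hnorm ip (Q1 - Q2) /\
    hnorm ip (T Q1 - T Q2) <= beta * hnorm ip (Q1 - Q2).
Proof.
move=> Tmu T KPsi Kav beta Q1 Q2 mu.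
have Hip : is_inner_product ip by case: Hrkhs.
set Q := Q1 - Q2.
pose S := sup (range (fun mu' => spec_norm (Kav mu'))).
have hbeta : beta = alpha * Num.sqrt (spec_norm KPsi * S) by [].
have hS : forall mu', spec_norm (Kav mu') <= S.
  move=> mu'; apply: sup_upper_bound; last by exists mu'.
  by split => //; exists (spec_norm (Kav mu)), mu.
have hKp : 0 <= spec_norm KPsi by exact: spec_ge0.
have hQ : 0 <= ip Q Q by exact: (ipxx_ge0 Hip).
have key : forall dd : 'I_Nav -> R,
    vnorm2 (\col_i dd i) <= Num.sqrt S * hnorm ip Q ->
    hnorm ip (alpha *: \sum_i dd i *: psi i) <= beta * hnorm ip Q.
  move=> dd hd; apply: le_trans (Lfinal Hip Halpha psi dd) _.
  rewrite hbeta sqrtrM // -!mulrA; apply: ler_wpM2l => //.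
  by apply: ler_wpM2l => //; rewrite sqrtr_ge0.
have evB : forall z, eval ip phi Q1 z - eval ip phi Q2 z = ip Q (phi z).
  by move=> z; rewrite /eval /Q (ipBl Hip).
split.
  rewrite /Tmu Ldiff; apply: key.
  under eq_mx do rewrite evB.
  apply: Lvn; [exact: vnorm2_ge0 | exact: hQ | | exact: (hS mu)].
  exact: (Lbound Hip phi (fun i => (sav i, mu (sav i))) Q).
rewrite /T Ldiff; apply: key.
apply/ler_addgt0Pr => e he.
set C := vnorm2 (\col_i (1 : R) : 'cV[R]_Nav).
have hC : 0 <= C by exact: vnorm2_ge0.
set eps := e / (C + 1).
have heps : 0 < eps by rewrite divr_gt0 // ltr_wpDl.
have hepsC : eps * C <= e.
  rewrite /eps mulrAC ler_pdivrMr ?ltr_wpDl // ler_wpM2l ?ltW //.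
  lra.
pose dd i := inf (range (fun a : A => eval ip phi Q1 (sav i, a)))
           - inf (range (fun a : A => eval ip phi Q2 (sav i, a))).
have hch : forall s : {s : 'rV[R]_D | SS s}, exists a : A,
    forall i, sav i = s -> `|dd i| <= `|ip Q (phi (sav i, a))| + eps.
  move=> s; case: (pselect (exists i, sav i = s)) => [[i0 hi0]|nex]; last first.
    by exists (mu s) => i hi; exfalso; apply: nex; exists i.
  have [a ha] := Linf (Hinf Q1 i0) (Hinf Q2 i0) heps.
  exists a => i hi; rewrite /dd hi -hi0 -evB; exact: ha.
have [mu' hmu'] := choice hch.
apply: le_trans (_ : vnorm2 (\col_i (`|ip Q (phi (sav i, mu' (sav i)))| + eps)) <= _).
  by apply: Lmono => i; apply: hmu'.
apply: le_trans (Lshift _ (ltW heps)) _; rewrite -/C.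
apply: lerD; last exact: hepsC.
apply: Lvn; [exact: vnorm2_ge0 | exact: hQ | | exact: (hS mu')].
exact: (Lbound Hip phi (fun i => (sav i, mu' (sav i))) Q).
Qed.
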